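(* Let $d\geq 2$ and $m\geq 1$ be integers, let $p=\frac{d+1}{d+m}$, and let $$Z=p\,\frac{I_d}{d}+(1-p)\,\frac{J_d}{d},$$ where $I_d$ is the $d\times d$ identity matrix and $J_d$ is the $d\times d$ matrix all of whose entries equal $1$. Then there exists an extreme point $\Phi$ of the convex set $\mathcal{CP}\!\left(M_d,M_{d+m};\,Z,\,\frac{I_{d+m}}{d+m}\right)$ whose Choi rank equals $d+m$.
   Context: $M_n$ denotes the algebra of complex $n\times n$ matrices. For positive semidefinite $A\in M_{d_1}$ and $B\in M_{d_2}$, $\mathcal{CP}(M_{d_1},M_{d_2};A,B)$ denotes the convex set of all completely positive linear maps $\Phi:M_{d_1}\to M_{d_2}$ such that $\Phi(I_{d_1})=B$ and $\Phi^*(I_{d_2})=A$, where $\Phi^*$ is the adjoint of $\Phi$ with respect to the Hilbert–Schmidt inner product; equivalently, $\Phi(X)=\sum_i K_iXK_i^\dagger$ with $d_2\times d_1$ matrices $K_i$ satisfying $\sum_i K_i^\dagger K_i=A$ and $\sum_i K_iK_i^\dagger=B$. An extreme point of a convex set $\mathcal{K}$ is an element $\Phi\in\mathcal{K}$ such that $\Phi=t\Phi_1+(1-t)\Phi_2$ with $\Phi_1,\Phi_2\in\mathcal{K}$, $t\in(0,1)$ implies $\Phi_1=\Phi_2=\Phi$. The Choi rank of $\Phi:M_{d_1}\to M_{d_2}$ is the rank of its Choi matrix $\sum_{r,s=1}^{d_1}E_{rs}\otimes\Phi(E_{rs})$ (equivalently, the minimal number of Kraus operators of $\Phi$), where $E_{rs}$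 are the matrix units. *)

(* Defs.v *)
From HB Require Import structures.
From mathcomp Require Import all_boot all_order all_algebra.
From mathcomp Require Import reals.
From mathcomp Require Import complex mxtens.
Set Implicit Arguments. Unset Strict Implicit. Unset Printing Implicit Defensive.
Import Order.TTheory GRing.Theory Num.Theory.
Local Open Scope ring_scope.

Definition adjmx (R : realType) (m n : nat) (K : 'M[R[i]]_(m, n)) : 'M[R[i]]_(n, m) :=
  (map_mx Num.conj K)^T.

Definition CPset (R : realType) (d1 d2 : nat) (A : 'M[R[i]]_d1) (B : 'M[R[i]]_d2)
  (Phi : 'M[R[i]]_d1 -> 'M[R[i]]_d2) : Prop :=
  exists Ks : seq 'M[R[i]]_(d2, d1),
    (forall X, Phi X = \sum_(K <- Ks) (K *m X *m adjmx K)) /\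
    \sum_(K <- Ks) (adjmx K *m K) = A /\
    \sum_(K <- Ks) (K *m adjmx K) = B.

Definition extreme_point (R : realType) (d1 d2 : nat)
  (S : ('M[R[i]]_d1 -> 'M[R[i]]_d2) -> Prop) (Phi : 'M[R[i]]_d1 -> 'M[R[i]]_d2) : Prop :=
  S Phi /\
  forall (Phi1 Phi2 : 'M[R[i]]_d1 -> 'M[R[i]]_d2) (t : R),
    S Phi1 -> S Phi2 -> 0 < t -> t < 1 ->
    Phi = (fun X => (t%:C)%C *: Phi1 X + ((1 - t)%:C)%C *: Phi2 X) ->
    Phi1 = Phi /\ Phi2 = Phi.

Definition choi_matrix (R : realType) (d1 d2 : nat) (Phi : 'M[R[i]]_d1 -> 'M[R[i]]_d2)
  : 'M[R[i]]_(d1 * d2) :=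
  \sum_(r < d1) \sum_(s < d1) (delta_mx r s *t Phi (delta_mx r s)).

Definition choi_rank (R : realType) (d1 d2 : nat) (Phi : 'M[R[i]]_d1 -> 'M[R[i]]_d2) : nat :=
  \rank (choi_matrix Phi).

(* Main.v *)
Require Import Defs.
From HB Require Import structures.
From mathcomp Require Import all_boot all_order all_algebra.
From mathcomp Require Import reals.
From mathcomp Require Import complex mxtens.
From mathcomp Require Import ring.
From Stdlib Require Import FunctionalExtensionality.
Import Order.TTheory GRing.Theory Num.Theory.
Local Open Scope ring_scope.
Set Implicit Arguments. Unset Strict Implicit. Unset Printing Implicit Defensive.

Section Adj.
Variable R : realType.
Local Notation C := (R[i]).

Lemma adjmxE m n (A : 'M[C]_(m, n)) i j : adjmx A i j = (A j i)^*.
Proof. by rewrite /adjmx !mxE. Qed.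

Lemma adjmxM m n p (A : 'M[C]_(m, n)) (B : 'M[C]_(n, p)) :
  adjmx (A *m B) = adjmx B *m adjmx A.
Proof. by rewrite /adjmx map_mxM trmx_mul. Qed.

Lemma adjmx_delta n (i j : 'I_n) : adjmx (delta_mx i j : 'M[C]_n) = delta_mx j i.
Proof.
apply/matrixP=> a b; rewrite adjmxE !mxE.
by case: (b == i); case: (a == j); rewrite /= ?conjC1 ?conjC0 // andbC.
Qed.

Lemma conj_realC (x : R) : ((x%:C)%C : C)^* = (x%:C)%C.
Proof. by apply/CrealP; rewrite complex_real. Qed.

Lemma sum_eq1 (T : finType) (j : T) (F : T -> C) :
  \sum_i (F i * (i == j)%:R) = F j.
Proof.
rewrite (bigD1 j) //= eqxx mulr1 big1 ?addr0 // => i /negPf ->.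
by rewrite mulr0.
Qed.

Lemma delta_mulmxE m n p (i : 'I_m) (j : 'I_n) (W : 'M[C]_(n, p)) a b :
  (delta_mx i j *m W) a b = (a == i)%:R * W j b.
Proof.
rewrite mxE (bigD1 j) //= big1 ?addr0 => [|k /negPf nk].
  by rewrite mxE eqxx andbT.
by rewrite mxE nk andbF mul0r.
Qed.

Lemma mulmx_deltaE m n p (W : 'M[C]_(m, n)) (i : 'I_n) (j : 'I_p) a b :
  (W *m delta_mx i j) a b = W a i * (b == j)%:R.
Proof.
rewrite mxE (bigD1 i) //= big1 ?addr0 => [|k /negPf nk].
  by rewrite mxE eqxx.
by rewrite mxE nk mulr0.
Qed.

Lemma sandwich_diag n (W : 'M[C]_n) :
  \sum_e (delta_mx e e *m W *m delta_mx e e) =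
  \matrix_(a, b) ((a == b)%:R * W a a).
Proof.
apply/matrixP=> a b; rewrite summxE mxE.
under eq_bigr => e _ do rewrite mulmx_deltaE delta_mulmxE.
rewrite (bigD1 a) //= eqxx mul1r big1 ?addr0.
  by rewrite mulrC eq_sym.
by move=> e; rewrite eq_sym => /negPf ->; rewrite mul0r mul0r.
Qed.

Lemma kraus_diag n d (Ks : seq 'M[C]_(n, d)) (w : 'cV[C]_d) a :
  (\sum_(K <- Ks) K *m (w *m adjmx w) *m adjmx K) a a =
  \sum_(K <- Ks) (K *m w) a 0 * ((K *m w) a 0)^*.
Proof.
rewrite summxE; apply: eq_bigr => K _.
rewrite mulmxA -mulmxA -adjmxM mxE big_ord1 adjmxE //.
Qed.

Lemma kraus_diag_ge0 n d (Ks : seq 'M[C]_(n, d)) (w : 'cV[C]_d) a :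
  0 <= \sum_(K <- Ks) (K *m w) a 0 * ((K *m w) a 0)^*.
Proof. by apply: sumr_ge0 => K _; apply: mul_conjC_ge0. Qed.

Lemma kraus_diag_eq0 n d (Ks : seq 'M[C]_(n, d)) (w : 'cV[C]_d) a :
  \sum_(K <- Ks) (K *m w) a 0 * ((K *m w) a 0)^* = 0 ->
  forall K, K \in Ks -> (K *m w) a 0 = 0.
Proof.
move/eqP; rewrite psumr_eq0 => [/allP H K /H|K _]; last exact: mul_conjC_ge0.
by rewrite /= mul_conjC_eq0 => /eqP.
Qed.

End Adj.

Section Gen.
Variables (R : realType) (d n : nat).
Local Notation C := (R[i]).
Variables (V : 'M[C]_(n, d)) (c : C).
Hypothesis c_neq0 : c != 0.
Hypothesis Gdiag : forall a, (V *m adjmx V) a a = c.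
Hypothesis Goff : forall a b, (V *m adjmx V) a b != 0.

Definition Kr (a : 'I_n) : 'M[C]_(n, d) := delta_mx a a *m V.
Definition PhiV (X : 'M[C]_d) : 'M[C]_n := \sum_a (Kr a *m X *m adjmx (Kr a)).

Lemma PhiV_E X : PhiV X = \matrix_(a, b) ((a == b)%:R * (V *m X *m adjmx V) a a).
Proof.
rewrite /PhiV -sandwich_diag; apply: eq_bigr => e _.
by rewrite /Kr adjmxM adjmx_delta !mulmxA.
Qed.

Lemma PhiV_CP : CPset (adjmx V *m V) (c *: 1%:M) PhiV.
Proof.
exists (map Kr (index_enum 'I_n)); split; first by move=> X; rewrite big_map.
split.
  rewrite big_map.
  under eq_bigr => a _ do rewrite /Kr adjmxM adjmx_delta !mulmxA -(mulmxA (adjmx V)) mul_delta_mx.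
  by rewrite -mulmx_suml -mulmx_sumr -mx1_sum_delta mulmx1.
rewrite big_map.
have -> : \sum_(i < n) Kr i *m adjmx (Kr i) = PhiV 1.
  by apply: eq_bigr => a _; rewrite mulmx1.
rewrite PhiV_E; apply/matrixP=> a b; rewrite !mxE mulmx1.
idtac.
by rewrite mulrC -(Gdiag a) [(V *m _) a a]mxE.
Qed.

Definition lam (K : 'M[C]_(n, d)) : 'rV[C]_n :=
  \row_a ((row a K *m adjmx (row a V)) 0 0 / c).

Lemma rowVV a : row a V *m adjmx (row a V) = c%:M.
Proof.
rewrite [LHS]mx11_scalar; congr (_%:M); rewrite -(Gdiag a) !mxE.
by apply: eq_bigr => j _; rewrite !adjmxE !mxE.
Qed.

Lemma lamP (K : 'M[C]_(n, d)) :
  (forall (w : 'cV[C]_d) a, (V *m w) a 0 = 0 -> (K *m w) a 0 = 0) ->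
  K = diag_mx (lam K) *m V.
Proof.
move=> HK; rewrite mul_diag_mx; apply/matrixP=> a j; rewrite !mxE.
pose r := row a V.
pose W : 'M[C]_d := 1%:M - c^-1 *: (adjmx r *m r).
have rW : r *m W = 0.
  rewrite mulmxBr mulmx1 -scalemxAr mulmxA rowVV mul_scalar_mx scalerA.
  by rewrite mulVf // scale1r subrr.
have KW : row a K *m W = 0.
  apply/matrixP=> i0 k; rewrite [i0]ord1 -row_mul mxE [RHS]mxE.
  have -> : (K *m W) a k = (K *m (W *m delta_mx k (0 : 'I_1))) a 0.
    by rewrite mulmxA mulmx_deltaE eqxx mulr1.
  apply: HK; rewrite mulmxA mulmx_deltaE eqxx mulr1.
  have rVW : row a (V *m W) = 0 by rewrite row_mul rW.
  have -> : (V *m W) a k = (row a (V *m W)) 0 k by rewrite [RHS]mxE.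
  by rewrite rVW mxE.
move/matrixP: KW => /(_ 0 j); rewrite mulmxBr mulmx1 -scalemxAr mulmxA.
rewrite [row a K *m adjmx r]mx11_scalar mul_scalar_mx !mxE.
move/eqP; rewrite subr_eq0 => /eqP ->.
by rewrite /r mulrA [c^-1 * _]mulrC.
Qed.


Lemma adjmx_diag (l : 'rV[C]_n) : adjmx (diag_mx l) = diag_mx (map_mx Num.conj l).
Proof.
apply/matrixP=> a b; rewrite adjmxE !mxE rmorphMn /= eq_sym.
by have [->|] := eqVneq a b; rewrite ?mulr0n.
Qed.

Lemma kraus_entry (l : 'rV[C]_n) (X : 'M[C]_d) a b :
  (diag_mx l *m V *m X *m adjmx (diag_mx l *m V)) a b =
  l 0 a * (l 0 b)^* * (V *m X *m adjmx V) a b.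
Proof.
rewrite adjmxM adjmx_diag !mulmxA -!(mulmxA (diag_mx l)) mul_mx_diag mul_diag_mx.
rewrite !mxE; ring.
Qed.

Lemma dominated (Ks1 : seq 'M[C]_(n, d)) (Phi1 : 'M[C]_d -> 'M[C]_n) :
  (forall X, Phi1 X = \sum_(K <- Ks1) (K *m X *m adjmx K)) ->
  \sum_(K <- Ks1) (K *m adjmx K) = c *: 1%:M ->
  (forall (w : 'cV[C]_d) a, (V *m w) a 0 = 0 ->
     forall K, K \in Ks1 -> (K *m w) a 0 = 0) ->
  Phi1 = PhiV.
Proof.
move=> hPhi hB hdom.
pose Cf a b := \sum_(K <- Ks1) (lam K 0 a * (lam K 0 b)^*).
have HX X a b : Phi1 X a b = Cf a b * (V *m X *m adjmx V) a b.
  rewrite hPhi summxE /Cf mulr_suml big_seq_cond [RHS]big_seq_cond.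
  apply: eq_bigr => K /andP [hK _].
  rewrite {1 2}(lamP (fun w a hw => hdom w a hw K hK)).
  exact: kraus_entry.
have HC a b : Cf a b = (a == b)%:R.
  have := HX 1%:M a b; rewrite hPhi.
  under eq_bigr => K _ do rewrite mulmx1.
  have E : (c *: 1%:M : 'M[C]_n) a b = c * (a == b)%:R by rewrite !mxE.
  rewrite hB mulmx1 E.
  have [-> | nab] := eqVneq a b.
    rewrite mulr1 Gdiag => h; apply: (mulIf c_neq0); by rewrite mul1r -h.
  rewrite mulr0 => /esym/eqP; rewrite mulf_eq0 (negPf (Goff a b)) orbF.
  by move/eqP.
apply: functional_extensionality => X.
apply/matrixP=> a b; rewrite HX HC PhiV_E [in RHS]mxE.
by have [-> | nab] := eqVneq a b; rewrite ?mul0r ?mul1r.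
Qed.

Lemma PhiV_extreme : extreme_point (CPset (adjmx V *m V) (c *: 1%:M)) PhiV.
Proof.
split; first exact: PhiV_CP.
move=> Phi1 Phi2 t [Ks1 [h1 [_ h1B]]] [Ks2 [h2 [_ h2B]]] t0 t1 hPhi.
have key (w : 'cV[C]_d) a : (V *m w) a 0 = 0 ->
    (forall K, K \in Ks1 -> (K *m w) a 0 = 0) /\
    (forall K, K \in Ks2 -> (K *m w) a 0 = 0).
  move=> hw.
  have E0 : PhiV (w *m adjmx w) a a = 0.
    rewrite PhiV_E mxE eqxx mul1r.
    by have := kraus_diag [:: V] w a; rewrite !big_seq1 => ->; rewrite hw mul0r.
  have := congr1 (fun F : 'M[C]_d -> 'M[C]_n => F (w *m adjmx w) a a) hPhi => /=.
  rewrite E0 !mxE h1 h2 !kraus_diag.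
  move/esym/eqP; rewrite paddr_eq0; last first.
  - by apply: mulr_ge0; [rewrite lecR subr_ge0 ltW | apply: kraus_diag_ge0].
  - by apply: mulr_ge0; [rewrite lecR ltW | apply: kraus_diag_ge0].
  have tC : (t%:C)%C != 0 :> C by apply: lt0r_neq0; rewrite ltcR.
  have tC' : ((1 - t)%:C)%C != 0 :> C.
    by apply: lt0r_neq0; rewrite ltcR subr_gt0.
  rewrite !mulf_eq0 (negPf tC) (negPf tC') /= => /andP [/eqP s1 /eqP s2].
  by split; apply: kraus_diag_eq0.
split.
  by apply: (dominated h1 h1B) => w a hw; case: (key w a hw).
by apply: (dominated h2 h2B) => w a hw; case: (key w a hw).
Qed.


Lemma sum_tens (F : 'I_(d * n) -> C) :
  \sum_i F i = \sum_(r < d) \sum_(e < n) F (mxtens_index (r, e)).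
Proof.
rewrite pair_big /= (reindex (@mxtens_index d n)) /=.
  by apply: eq_bigr => -[r e].
exact: onW_bij (Bijective (@mxtens_indexK d n) (@mxtens_unindexK d n)).
Qed.

Definition Psi : 'M[C]_(d * n, n) :=
  \matrix_(i, e) (V e (mxtens_unindex i).1 * ((mxtens_unindex i).2 == e)%:R).

Lemma PsiE r a e : Psi (mxtens_index (r, a)) e = V e r * (a == e)%:R.
Proof. by rewrite mxE mxtens_indexK. Qed.

Lemma choi_PhiV : choi_matrix PhiV = Psi *m adjmx Psi.
Proof.
apply/matrixP=> i j.
case: (mxtens_indexP i) => r a; case: (mxtens_indexP j) => s b.
rewrite /choi_matrix summxE.
under eq_bigr => r' _ do rewrite summxE.
under eq_bigr => r' _ do under eq_bigr => s' _ do rewrite tensmxE mxE.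
have -> : \sum_(r' < d) \sum_(s' < d)
    ((r == r') && (s == s'))%:R * PhiV (delta_mx r' s') a b
  = \sum_(r' < d) (\sum_(s' < d) PhiV (delta_mx r' s') a b * (s' == s)%:R)
       * (r' == r)%:R.
  apply: eq_bigr => r' _; rewrite mulr_suml; apply: eq_bigr => s' _.
  by rewrite -mulnb natrM [r' == r]eq_sym [s' == s]eq_sym; ring.
under eq_bigr => r' _ do rewrite sum_eq1.
rewrite sum_eq1 PhiV_E mxE mxE.
under eq_bigr => k _ do rewrite mulmx_deltaE adjmxE.
rewrite mxE.
under [in RHS]eq_bigr => e _ do rewrite adjmxE !PsiE.
have -> : \sum_e V e r * (a == e)%:R * (V e s * (b == e)%:R)^* =
          \sum_e (V e r * (V e s)^* * (b == e)%:R) * (e == a)%:R.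
  apply: eq_bigr => e _; rewrite rmorphM rmorph_nat eq_sym; ring.
rewrite sum_eq1.
have -> : \sum_k V a r * (k == s)%:R * (V a k)^* =
          \sum_k (V a r * (V a k)^*) * (k == s)%:R.
  by apply: eq_bigr => k _; ring.
by rewrite sum_eq1 eq_sym mulrC.
Qed.

Lemma PsiPsi : adjmx Psi *m Psi = c^* *: 1%:M.
Proof.
apply/matrixP=> e f; rewrite mxE sum_tens.
have -> : \sum_(r < d) \sum_(a < n)
    adjmx Psi e (mxtens_index (r, a)) * Psi (mxtens_index (r, a)) f
  = \sum_(r < d) ((V e r)^* * V f r * (e == f)%:R).
  apply: eq_bigr => r _.
  under eq_bigr => a _ do rewrite adjmxE !PsiE rmorphM rmorph_nat.
  have -> : \sum_a (V e r)^* * (a == e)%:R * (V f r * (a == f)%:R) =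
            \sum_a ((V e r)^* * V f r * (a == f)%:R) * (a == e)%:R.
    by apply: eq_bigr => a _; ring.
  by rewrite sum_eq1 eq_sym.
rewrite -mulr_suml !mxE.
have [<- | nef] := eqVneq e f; last by rewrite !mulr0.
rewrite mulr1 mulr1 -(Gdiag e) mxE rmorph_sum; apply: eq_bigr => r _.
by rewrite adjmxE rmorphM /= conjCK mulrC.
Qed.

Lemma choi_rank_PhiV : choi_rank PhiV = n.
Proof.
rewrite /choi_rank choi_PhiV; apply/eqP; rewrite eqn_leq; apply/andP; split.
  exact: leq_trans (mxrankM_maxl _ _) (rank_leq_col _).
have cc : c^* * c^* != 0 by rewrite mulf_eq0 conjC_eq0 (negPf c_neq0).
apply: (@mulmx1_min_rank _ n _ _ _ (adjmx Psi) ((c^* * c^*)^-1 *: Psi)).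
rewrite -scalemxAr !mulmxA -(mulmxA (adjmx Psi *m Psi)) PsiPsi.
by rewrite -scalemxAl -scalemxAr mul1mx !scalerA -mulrA mulVf ?scale1r.
Qed.

End Gen.

Section Real.
Variable R : realType.

Lemma sum_indic (N' k : nat) :
  \sum_(a < N') (((a : nat) == k)%:R : R) = (k < N')%:R.
Proof.
case: (ltnP k N') => hk.
  rewrite (bigD1 (Ordinal hk)) //= eqxx big1 ?addr0 // => a ha.
  case: eqP => // hak; move: ha; suff -> : a = Ordinal hk by rewrite eqxx.
  exact: val_inj.
rewrite big1 // => a _; case: eqP => // hak.
by move: (ltn_ord a); rewrite hak ltnNge hk.
Qed.

Lemma sum_indic' (N' k : nat) :
  \sum_(a < N') ((k == (a : nat))%:R : R) = (k < N')%:R.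
Proof. by rewrite -sum_indic; apply: eq_bigr => a _; rewrite eq_sym. Qed.

Variables (d m : nat).
Hypothesis hd : (2 <= d)%N.
Hypothesis hm : (1 <= m)%N.

Let D : R := d%:R.
Let N : R := (d + m)%:R.
Let z : R := Num.sqrt (1 / (D * N)).
Let t : R := Num.sqrt ((D + 1) / (D * N)).
Let y : R := (z - t) / D.

Lemma D_gt0 : 0 < D. Proof. by rewrite /D ltr0n; case: d hd. Qed.
Lemma N_gt0 : 0 < N. Proof. by rewrite /N ltr0n addn_gt0; case: d hd. Qed.
Lemma zz : z * z = 1 / (D * N).
Proof.
have hD := D_gt0; have hN := N_gt0.
by rewrite -expr2 sqr_sqrtr // divr_ge0 ?mulr_ge0 ?ltW.
Qed.
Lemma tt : t * t = (D + 1) / (D * N).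
Proof.
have hD := D_gt0; have hN := N_gt0.
by rewrite -expr2 sqr_sqrtr // divr_ge0 ?addr_ge0 ?mulr_ge0 ?ltW.
Qed.
Lemma z_gt0 : 0 < z.
Proof. by rewrite sqrtr_gt0 divr_gt0 // mulr_gt0 //; [exact: D_gt0|exact: N_gt0]. Qed.

Definition ya (a : 'I_(d + m)) : R := if (a < d)%N then y else z.

Definition Vr : 'M[R]_(d + m, d) :=
  \matrix_(a, j) (ya a + ((a : nat) == j)%:R * t).

Lemma VVtE a b : (Vr *m Vr^T) a b =
  D * ya a * ya b + t * ya a * (b < d)%:R + t * ya b * (a < d)%:R
  + t * t * ((a : nat) == b)%:R * (a < d)%:R.
Proof.
rewrite mxE.
have -> : \sum_j Vr a j * Vr^T j b =
  \sum_(j < d) (ya a * ya b + t * ya a * (((b : nat) == j)%:R)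
     + t * ya b * (((a : nat) == j)%:R)
     + t * t * (((a : nat) == b)%:R * ((a : nat) == j)%:R)).
  apply: eq_bigr => j _; rewrite !mxE.
  have E : ((a:nat) == j)%:R * ((b:nat) == j)%:R
         = ((a:nat) == b)%:R * ((a:nat) == j)%:R :> R.
    case: (a =P j :> nat) => [->|]; case: (b =P j :> nat) => [->|] //=;
      rewrite ?eqxx ?mulr0 ?mul0r ?mulr1 // => nbj.
    by rewrite eq_sym (introF eqP nbj).
  rewrite -E; ring.
rewrite !big_split /= sumr_const card_ord -!mulr_sumr.
rewrite !sum_indic' /D -mulr_natl; ring.
Qed.


Lemma ya_ind (a : 'I_(d + m)) (j : 'I_d) :
  ya a * ((a : nat) == j)%:R = y * ((a : nat) == j)%:R.
Proof.
rewrite /ya; case: (a =P j :> nat) => [->|]; last by rewrite !mulr0.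
by rewrite ltn_ord.
Qed.

Lemma sum_ya2 : \sum_(a < d + m) ya a * ya a = D * y * y + m%:R * z * z.
Proof.
rewrite big_split_ord /=.
have -> : \sum_(i < d) ya (lshift m i) * ya (lshift m i) = \sum_(i < d) y * y.
  by apply: eq_bigr => i _; rewrite /ya /= ltn_ord.
have -> : \sum_(i < m) ya (rshift d i) * ya (rshift d i) = \sum_(i < m) z * z.
  by apply: eq_bigr => i _; rewrite /ya /= ltnNge leq_addr.
by rewrite !sumr_const !card_ord /D -[y * y *+ d]mulr_natl -[z * z *+ m]mulr_natl; ring.
Qed.

Lemma VtVE j k : (Vr^T *m Vr) j k =
  D * y * y + m%:R * z * z + 2%:R * t * y + t * t * (j == k)%:R.
Proof.
rewrite mxE.
have -> : \sum_a Vr^T j a * Vr a k =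
  \sum_(a < d + m) (ya a * ya a + t * (y * ((a : nat) == k)%:R)
     + t * (y * ((a : nat) == j)%:R)
     + t * t * ((j == k)%:R * ((a : nat) == j)%:R)).
  apply: eq_bigr => a _; rewrite !mxE.
  have E : ((a:nat) == j)%:R * ((a:nat) == k)%:R
         = (j == k)%:R * ((a:nat) == j)%:R :> R.
    case: (a =P j :> nat) => [aj|]; last by rewrite !mul0r mulr0.
    by rewrite aj mulrC.
  rewrite -E -!ya_ind; ring.
rewrite !big_split /= sum_ya2 -!mulr_sumr !sum_indic.
have hj : (j < d + m)%N := leq_trans (ltn_ord j) (leq_addr m d).
have hk : (k < d + m)%N := leq_trans (ltn_ord k) (leq_addr m d).
rewrite hj hk /= !mulr1; ring.
Qed.


Lemma yid1 : D * y * y + 2%:R * t * y = (z * z - t * t) / D.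
Proof. have := D_gt0; rewrite /y lt0r => /andP [hD _]; field; exact: hD. Qed.
Lemma yid2 : D * y + t = z.
Proof. have := D_gt0; rewrite /y lt0r => /andP [hD _]; field; exact: hD. Qed.

Lemma hD1 : (d%:R : R) != 0. Proof. by rewrite pnatr_eq0; case: d hd. Qed.
Lemma hN1 : (d%:R + m%:R : R) != 0.
Proof. by rewrite -natrD pnatr_eq0 addn_eq0; case: d hd. Qed.

Lemma RG a b : (Vr *m Vr^T) a b =
  if (a < d)%N && (b < d)%N then (if (a : nat) == b then N^-1 else - (D * N)^-1)
  else if (a < d)%N || (b < d)%N then (D * N)^-1 else N^-1.
Proof.
have hD := hD1; have hN := hN1.
rewrite VVtE /ya; case: (ltnP a d) => ha; case: (ltnP b d) => hb /=.
- case: eqP => _ /=.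
    rewrite !mulr1 (_ : D * y * y + t * y + t * y + t * t
      = (D * y * y + 2%:R * t * y) + t * t); last by ring.
    by rewrite yid1 zz tt /D /N; field; rewrite ?hD ?hN.
  rewrite !mulr1 mulr0 addr0 (_ : D * y * y + t * y + t * y
      = (D * y * y + 2%:R * t * y)); last by ring.
  by rewrite yid1 zz tt /D /N; field; rewrite ?hD ?hN.
- have -> : ((a : nat) == b) = false.
    by apply/negbTE; rewrite neq_ltn (leq_trans ha hb).
  rewrite !mulr1 !mulr0 !addr0 (_ : D * y * z + t * z = z * (D * y + t)); last by ring.
  by rewrite yid2 zz /D /N; field; rewrite ?hD ?hN.
- rewrite !mulr1 !mulr0 !addr0 (_ : D * z * y + t * z = z * (D * y + t)); last by ring.
  by rewrite yid2 zz /D /N; field; rewrite ?hD ?hN.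
- by rewrite !mulr0 !addr0 -mulrA zz /D /N; field; rewrite ?hD ?hN.
Qed.


Lemma RZ j k : (Vr^T *m Vr) j k =
  (d.+1)%:R / (d + m)%:R / d%:R * (j == k)%:R
  + (1 - (d.+1)%:R / (d + m)%:R) / d%:R.
Proof.
have hD := hD1; have hN := hN1.
rewrite VtVE (_ : D * y * y + m%:R * z * z + 2%:R * t * y + t * t * (j == k)%:R
  = (D * y * y + 2%:R * t * y) + m%:R * (z * z) + t * t * (j == k)%:R); last by ring.
rewrite yid1 zz tt /D /N -addn1 !natrD; field; rewrite ?hD ?hN //.
Qed.

End Real.

Theorem mainTheorem1 (R : realType) (d m : nat) :
  (2 <= d)%N -> (1 <= m)%N ->
  let p : R := (d.+1)%:R / (d + m)%:R in
  let Z : 'M[R[i]]_d :=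
    ((p / d%:R)%:C)%C *: (1%:M : 'M[R[i]]_d)
    + (((1 - p) / d%:R)%:C)%C *: (const_mx 1 : 'M[R[i]]_d) in
  let B : 'M[R[i]]_(d + m) := ((((d + m)%:R)^-1 : R)%:C)%C *: 1%:M in
  exists Phi : 'M[R[i]]_d -> 'M[R[i]]_(d + m),
    extreme_point (CPset Z B) Phi
    /\ choi_rank Phi = (d + m)%N.
Proof.
move=> hd hm p Z B.
pose V := map_mx (real_complex R) (Vr R d m).
have adjV : adjmx V = map_mx (real_complex R) (Vr R d m)^T.
  by apply/matrixP=> i0 j0; rewrite adjmxE !mxE conj_realC.
have GV : V *m adjmx V = map_mx (real_complex R) (Vr R d m *m (Vr R d m)^T).
  by rewrite adjV -map_mxM.
have ZV : Z = adjmx V *m V.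
  rewrite adjV -map_mxM; apply/matrixP=> j k; rewrite [in RHS]mxE (RZ R hd hm) !mxE.
  by rewrite [RHS]rmorphD [in RHS]rmorphM rmorph_nat mulr1.
pose c : R[i] := ((((d + m)%:R)^-1 : R)%:C)%C.
have d0 : (0 < d)%N := ltnW hd.
have hN : ((d + m)%:R : R) != 0 by rewrite pnatr_eq0 -lt0n addn_gt0 d0.
have hD : (d%:R : R) != 0 by rewrite pnatr_eq0 -lt0n d0.
have cne0 : c != 0 by rewrite /c fmorph_eq0 invr_eq0.
have Gd a : (V *m adjmx V) a a = c.
  rewrite GV mxE (RG R hd hm) eqxx /c andbb orbb.
  by case: (a < d)%N.
have Go a b : (V *m adjmx V) a b != 0.
  rewrite GV mxE (RG R hd hm) fmorph_eq0.
  case: ifP => _; [case: ifP => _|case: ifP => _];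
    rewrite ?oppr_eq0 invr_eq0 ?mulf_neq0 //.
rewrite ZV /B -/c.
exists (PhiV V); split; first exact: PhiV_extreme.
exact: (choi_rank_PhiV cne0 Gd).
Qed.
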